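(* Let $p, p' > 1$ be real numbers with $\frac{1}{p}+\frac{1}{p'}=1$, let $\mu,\nu$ be probability distributions on $S$ with $\nu(s)>0$ for all $s\in S$, and let $\rho$ be a probability distribution on $\{1,\dots,N\}$. Then for every joint stationary strategy $\boldsymbol{\pi}=(\pi^1,\dots,\pi^N)$ and every tuple of functions $(v^1,\dots,v^N)$ with $v^i:S\to\mathbb{R}$, $$\Big(\sum_{i=1}^N \rho(i)\,\big\|v^{*i}_{\boldsymbol{\pi}^{-i}} - v^i_{\boldsymbol{\pi}}\big\|_{\mu,p}^p\Big)^{1/p} \le \frac{2^{1/p'}\, C_\infty(\mu,\nu)^{1/p}}{1-\gamma}\left[\sum_{i=1}^N \rho(i)\Big(\big\|\mathcal{T}^{*i}_{\boldsymbol{\pi}^{-i}} v^i - v^i\big\|_{\nu,p}^p + \big\|\mathcal{T}^i_{\boldsymbol{\pi}} v^i - v^i\big\|_{\nu,p}^p\Big)\right]^{1/p}.$$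
   Context: An $N$-player Markov game has a finite state space $S$, finite nonempty action sets $A^i(s)$ for each player $i\in\{1,\dots,N\}$ and state $s$, rewards $r^i(s,\mathbf a)\in\mathbb{R}$ for joint actions $\mathbf a=(a^1,\dots,a^N)$, a transition kernel $p(s'|s,\mathbf a)$, and a discount factor $\gamma\in[0,1)$. We write $\mathbf a=(a^i,\mathbf a^{-i})$ where $\mathbf a^{-i}$ is the joint action of all players other than $i$. A stationary strategy $\pi^i$ of player $i$ assigns to each $s$ a probability distribution $\pi^i(\cdot|s)$ on $A^i(s)$; a joint strategy is $\boldsymbol\pi=(\pi^1,\dots,\pi^N)=(\pi^i,\boldsymbol\pi^{-i})$, with actions drawn independently across players. Define $\mathcal P_{\boldsymbol\pi}(s'|s)=E_{\mathbf a\sim\boldsymbol\pi(\cdot|s)}[p(s'|s,\mathbf a)]$, $r^i_{\boldsymbol\pi}(s)=E_{\mathbf a\sim\boldsymbol\pi(\cdot|s)}[r^i(s,\mathbf a)]$, $\mathcal P_{\boldsymbol\pi^{-i}}(s'|s,a^i)=E_{\mathbf a^{-i}\sim\boldsymbol\pi^{-i}(\cdot|s)}[p(s'|s,a^i,\mathbf a^{-i})]$, $r^i_{\boldsymbol\pi^{-i}}(s,a^i)=E_{\mathbf a^{-i}\sim\boldsymbol\pi^{-i}(\cdot|s)}[r^i(s,a^i,\mathbf a^{-i})]$. The value of $\boldsymbol\pi$ for player $i$ is $v^i_{\boldsymbol\pi}=(\mathcal I-\gamma\mathcal P_{\boldsymbol\pi})^{-1}r^i_{\boldsymbol\pi}$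 (vectors/matrices indexed by $S$, $\mathcal I$ the identity). The best-response value is $v^{*i}_{\boldsymbol\pi^{-i}}=\max_{\tilde\pi^i} v^i_{\tilde\pi^i,\boldsymbol\pi^{-i}}$ (pointwise maximum over stationary strategies of player $i$). For $v:S\to\mathbb R$, the Bellman operators are $\mathcal T^i_{\boldsymbol\pi}v(s)=r^i_{\boldsymbol\pi}(s)+\gamma\sum_{s'}\mathcal P_{\boldsymbol\pi}(s'|s)v(s')$ and $\mathcal T^{*i}_{\boldsymbol\pi^{-i}}v(s)=\max_{a^i\in A^i(s)}\big[r^i_{\boldsymbol\pi^{-i}}(s,a^i)+\gamma\sum_{s'}\mathcal P_{\boldsymbol\pi^{-i}}(s'|s,a^i)v(s')\big]$. For a distribution $\mu$ on $S$ and $f:S\to\mathbb R$, $\|f\|_{\mu,p}=(\sum_{s}\mu(s)|f(s)|^p)^{1/p}$. The concentrability coefficient of a joint strategy $\boldsymbol\pi$ is $C_\infty(\mu,\nu,\boldsymbol\pi)=\max_{s\in S}\frac{[(1-\gamma)\mu^T(\mathcal I-\gamma\mathcal P_{\boldsymbol\pi})^{-1}](s)}{\nu(s)}$ (the sup-norm of the Radon–Nikodym derivative of the distribution $(1-\gamma)\mu^T(\mathcal I-\gamma\mathcal P_{\boldsymbol\pi})^{-1}$ with respect to $\nu$), and $C_\infty(\mu,\nu)=\sup_{\boldsymbol\pi}C_\infty(\mu,\nu,\boldsymbol\pi)$, the supremum over all joint stationary strategies. *)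

(* Defs.v *)
From Stdlib Require Import Reals ClassicalEpsilon.
From mathcomp Require Import all_boot.
Set Implicit Arguments. Unset Strict Implicit. Unset Printing Implicit Defensive.
Local Open Scope R_scope.

Definition rsum (T : finType) (f : T -> R) : R := \big[Rplus/0]_(t : T) f t.

(* x^y for x >= 0, y > 0 with the convention 0^y = 0
   (Stdlib's Rpower 0 y = 1, which is not the intended value). *)
Definition rpow (x y : R) : R := if Rle_dec x 0 then 0 else Rpower x y.

Definition Rsup (E : R -> Prop) : R := epsilon (inhabits 0) (fun x => is_lub E x).

Definition delta (T : finType) (x y : T) : R := if x == y then 1 else 0.
Definition minv (T : finType) (M : T -> T -> R) : T -> T -> R :=
  epsilon (inhabits (fun _ _ => 0)) (fun B : T -> T -> R =>
    (forall x y, rsum (fun z => M x z * B z y) = delta x y) /\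
    (forall x y, rsum (fun z => B x z * M z y) = delta x y)).

Definition is_distr (T : finType) (d : T -> R) : Prop :=
  (forall t, 0 <= d t) /\ rsum d = 1.

Section Game.
Variables (N : nat) (S : finType) (A : 'I_N -> S -> finType).

Definition joint (s : S) : finType := {dffun forall i : 'I_N, A i s}.

Unset Implicit Arguments.
Record game := Game {
  rew : 'I_N -> forall s : S, joint s -> R;
  trans : forall s : S, joint s -> S -> R;
  discount : R
}.
Set Implicit Arguments.

Definition valid_game (G : game) : Prop :=
  (forall i s, 0 < #|A i s|)%N /\
  (forall (s : S) (a : joint s), is_distr (trans G s a)) /\
  0 <= discount G < 1.

Definition strategy (i : 'I_N) := forall s : S, A i s -> R.
Definition is_strategy i (sg : strategy i) := forall s, is_distr (sg s).
Definition jstrategy := forall i : 'I_N, strategy i.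
Definition is_jstrategy (pi : jstrategy) := forall i, is_strategy (pi i).

Definition jprob (pi : jstrategy) (s : S) (a : joint s) : R :=
  \big[Rmult/1]_(i : 'I_N) pi i s (a i).
Definition devprob (pi : jstrategy) (i : 'I_N) (sg : strategy i) (s : S) (a : joint s) : R :=
  sg s (a i) * \big[Rmult/1]_(j : 'I_N | j != i) pi j s (a j).

Variable G : game.

Definition Pq (q : forall s, joint s -> R) (s s' : S) : R :=
  rsum (fun a : joint s => q s a * trans G s a s').
Definition rq (q : forall s, joint s -> R) (i : 'I_N) (s : S) : R :=
  rsum (fun a : joint s => q s a * rew G i s a).
Definition resolvent (q : forall s, joint s -> R) : S -> S -> R :=
  minv (fun x y => delta x y - discount G * Pq q x y).
Definition valueq (q : forall s, joint s -> R) (i : 'I_N) (s : S) : R :=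
  rsum (fun s' => resolvent q s s' * rq q i s').

Definition value (pi : jstrategy) (i : 'I_N) : S -> R := valueq (jprob pi) i.
Definition brvalue (pi : jstrategy) (i : 'I_N) (s : S) : R :=
  Rsup (fun x => exists sg : strategy i, is_strategy sg /\ x = valueq (devprob pi sg) i s).

Definition rdev (pi : jstrategy) (i : 'I_N) (s : S) (ai : A i s) : R :=
  rsum (fun a : joint s => if a i == ai then
          (\big[Rmult/1]_(j : 'I_N | j != i) pi j s (a j)) * rew G i s a else 0).
Definition Pdev (pi : jstrategy) (i : 'I_N) (s : S) (ai : A i s) (s' : S) : R :=
  rsum (fun a : joint s => if a i == ai then
          (\big[Rmult/1]_(j : 'I_N | j != i) pi j s (a j)) * trans G s a s' else 0).

Definition bellman (pi : jstrategy) (i : 'I_N) (v : S -> R) (s : S) : R :=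
  rq (jprob pi) i s + discount G * rsum (fun s' => Pq (jprob pi) s s' * v s').
Definition bellman_star (pi : jstrategy) (i : 'I_N) (v : S -> R) (s : S) : R :=
  Rsup (fun x => exists ai : A i s,
          x = rdev pi ai + discount G * rsum (fun s' => Pdev pi ai s' * v s')).

Definition Cinf_pi (mu nu : S -> R) (pi : jstrategy) : R :=
  \big[Rmax/0]_(s : S)
    ((1 - discount G) * rsum (fun s0 => mu s0 * resolvent (jprob pi) s0 s) / nu s).
Definition Cinf (mu nu : S -> R) : R :=
  Rsup (fun x => exists pi, is_jstrategy pi /\ x = Cinf_pi mu nu pi).

End Game.
Arguments rew {N S A} g i s a.
Arguments trans {N S A} g s a s'.
Arguments discount {N S A} g.

Definition pnorm (S : finType) (mu : S -> R) (p : R) (f : S -> R) : R :=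
  rpow (rsum (fun s => mu s * rpow (Rabs (f s)) p)) (1 / p).

(* Main.v *)
Require Import Defs.
From Stdlib Require Import Reals Lra ClassicalEpsilon FunctionalExtensionality.
From mathcomp Require Import all_boot all_algebra.
From mathcomp Require Import Rstruct.
Set Warnings "-notation-overridden,-ambiguous-paths".
Local Open Scope R_scope.
Section Sums.
Variable T : finType.
Implicit Types f g : T -> R.

Lemma rsum_plus f g : rsum (fun t => f t + g t) = rsum f + rsum g.
Proof. by rewrite /rsum big_split. Qed.
Lemma rsum_scal f c : rsum (fun t => c * f t) = c * rsum f.
Proof. by rewrite /rsum big_distrr. Qed.
Lemma rsum_scalr f c : rsum (fun t => f t * c) = rsum f * c.
Proof. by rewrite /rsum big_distrl. Qed.
Lemma rsum_ext f g : (forall t, f t = g t) -> rsum f = rsum g.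
Proof. by move=> H; rewrite /rsum; apply: eq_bigr => t _; apply: H. Qed.
Lemma rsum_le f g : (forall t, f t <= g t) -> rsum f <= rsum g.
Proof.
move=> H; rewrite /rsum; elim/big_ind2: _ => //; first lra.
by move=> x1 x2 y1 y2 ? ?; lra.
Qed.
Lemma rsum_ge0 f : (forall t, 0 <= f t) -> 0 <= rsum f.
Proof.
move=> H; rewrite /rsum; elim/big_ind: _ => //; first lra.
by move=> x y ? ?; lra.
Qed.
Lemma rsum_opp f : rsum (fun t => - f t) = - rsum f.
Proof. rewrite -(@rsum_ext (fun t => -1 * f t)); last by move=> t; ring.
by rewrite rsum_scal; ring. Qed.
Lemma rsum_minus f g : rsum (fun t => f t - g t) = rsum f - rsum g.
Proof. by rewrite /Rminus rsum_plus rsum_opp. Qed.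
Lemma rsum_const0 : rsum (fun _ : T => 0) = 0.
Proof. by rewrite /rsum big1. Qed.
Lemma rsum_term f t : (forall t, 0 <= f t) -> f t <= rsum f.
Proof.
move=> H; rewrite /rsum (bigD1 t) //=.
have : 0 <= \big[Rplus/0]_(i | i != t) f i.
  by elim/big_ind: _ => //; [lra| move=> x y ? ?; lra].
simpl; lra.
Qed.
Lemma rsum_delta f t0 : rsum (fun t => delta t0 t * f t) = f t0.
Proof.
rewrite /rsum (bigD1 t0) //= big1 /delta ?eqxx.
  simpl; ring.
by move=> t /negPf; rewrite eq_sym => ->; ring.
Qed.
Lemma rsum_delta' f t0 : rsum (fun t => f t * delta t t0) = f t0.
Proof.
rewrite /rsum (bigD1 t0) //= big1 /delta ?eqxx.
  simpl; ring.
by move=> t /negPf ->; ring.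
Qed.
End Sums.
Arguments rsum_plus {T}. Arguments rsum_scal {T}. Arguments rsum_scalr {T}.
Arguments rsum_ext {T}. Arguments rsum_le {T}. Arguments rsum_ge0 {T}.
Arguments rsum_opp {T}. Arguments rsum_minus {T}. Arguments rsum_const0 {T}.
Arguments rsum_term {T}. Arguments rsum_delta {T}. Arguments rsum_delta' {T}.

Lemma rsum_swap (T U : finType) (F : T -> U -> R) :
  rsum (fun t => rsum (fun u => F t u)) = rsum (fun u => rsum (fun t => F t u)).
Proof. by rewrite /rsum exchange_big. Qed.

Lemma ex_argmin (T : finType) (f : T -> R) (t0 : T) : exists m, forall t, f m <= f t.
Proof.
suff H : forall s : seq T, exists m, forall t, t \in t0 :: s -> f m <= f t.
  have [m Hm] := H (enum T); exists m => t; apply: Hm.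
  by rewrite inE mem_enum orbT.
elim=> [|x s [m Hm]].
  by exists t0 => t; rewrite inE => /eqP ->; lra.
destruct (Rle_dec (f m) (f x)) as [h|h].
  exists m => t; rewrite !inE => /orP [/eqP ->|/orP [/eqP ->|ht]] //.
  + by apply: Hm; rewrite inE eqxx.
  + by apply: Hm; rewrite inE ht orbT.
exists x => t; rewrite !inE => /orP [/eqP ->|/orP [/eqP ->|ht]].
+ have := Hm t0; rewrite inE eqxx => /(_ isT); lra.
+ lra.
+ have := Hm t; rewrite inE ht orbT => /(_ isT); lra.
Qed.

Lemma ex_argmax (T : finType) (f : T -> R) (t0 : T) : exists m, forall t, f t <= f m.
Proof. have [m Hm] := @ex_argmin T (fun t => - f t) t0; exists m => t; have := Hm t; lra. Qed.

Lemma Rsup_lub (E : R -> Prop) x : is_lub E x -> Rsup E = x.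
Proof.
move=> H; rewrite /Rsup.
have Hs := epsilon_spec (inhabits 0) (fun x => is_lub E x) (ex_intro _ x H).
set y := epsilon _ _ in Hs *.
destruct H as [H1 H2]; destruct Hs as [H3 H4].
apply: Rle_antisym; [apply: H4 H1 | apply: H2 H3].
Qed.

Lemma Rsup_ge (E : R -> Prop) B x : (forall y, E y -> y <= B) -> E x -> x <= Rsup E.
Proof.
move=> HB Hx.
have [l Hl] := completeness E (ex_intro _ B HB) (ex_intro _ x Hx).
rewrite (@Rsup_lub E l Hl); by apply Hl.
Qed.

Lemma Rsup_le (E : R -> Prop) B : (forall y, E y -> y <= B) -> (exists x, E x) -> Rsup E <= B.
Proof.
move=> HB [x Hx].
have [l Hl] := completeness E (ex_intro _ B HB) (ex_intro _ x Hx).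
rewrite (@Rsup_lub E l Hl); by apply Hl.
Qed.
Arguments ex_argmin {T}. Arguments ex_argmax {T}.
Lemma rpow_pos x y : 0 < x -> rpow x y = Rpower x y.
Proof. move=> h; rewrite /rpow; case: Rle_dec => // h' /=; lra. Qed.
Lemma rpow_0 y : rpow 0 y = 0.
Proof. rewrite /rpow; case: Rle_dec => // h' /=; lra. Qed.
Lemma rpow_ge0 x y : 0 <= rpow x y.
Proof. rewrite /rpow; case: Rle_dec => h /=; [lra| rewrite /Rpower; left; apply: exp_pos]. Qed.
Lemma rpow_gt0 x y : 0 < x -> 0 < rpow x y.
Proof. move=> h; rewrite rpow_pos //; apply: exp_pos. Qed.
Lemma rpow_mult x y z : 0 <= x -> rpow (rpow x y) z = rpow x (y * z).
Proof.
case=> h; last by rewrite -h !rpow_0.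
by rewrite !rpow_pos ?Rpower_mult //; apply: exp_pos.
Qed.
Lemma rpow_1 x : 0 <= x -> rpow x 1 = x.
Proof. case=> h; last by rewrite -h rpow_0. by rewrite rpow_pos ?Rpower_1. Qed.
Lemma rpow_plus x y z : 0 <= x -> rpow x (y + z) = rpow x y * rpow x z.
Proof. case=> h; last by rewrite -h !rpow_0; ring. by rewrite !rpow_pos ?Rpower_plus. Qed.
Lemma rpow_mul x y z : 0 <= x -> 0 <= y -> rpow (x * y) z = rpow x z * rpow y z.
Proof.
move=> hx' hy'; case: hx' => hx; first case: hy' => hy.
all: try by rewrite -hx Rmult_0_l !rpow_0; ring.
 2: by rewrite -hy Rmult_0_r !rpow_0; ring.
rewrite !rpow_pos ?Rpower_mult_distr //; nra.
Qed.
Lemma rpow_le x y c : 0 <= x <= y -> 0 < c -> rpow x c <= rpow y c.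
Proof.
move=> [[hx|hx] hxy] hc; last by rewrite -hx rpow_0; apply: rpow_ge0.
rewrite !rpow_pos; try lra. apply: Rle_Rpower_l; lra.
Qed.
Lemma rpow_inv x c : 0 < x -> rpow (/ x) c = / rpow x c.
Proof.
move=> h; rewrite !rpow_pos //; last by apply: Rinv_0_lt_compat.
by rewrite /Rpower ln_Rinv // -exp_Ropp; f_equal; ring.
Qed.

Lemma exp_ge1 u : 1 + u <= exp u.
Proof. exact: exp_ineq1_le. Qed.

Lemma tangent x y p : 0 <= x -> 0 < y -> 1 < p ->
  rpow y p + p * rpow y (p - 1) * (x - y) <= rpow x p.
Proof.
move=> hx hy hp.
have hyp : rpow y p = rpow y (p - 1) * y.
  by rewrite -{3}(rpow_1 y (Rlt_le _ _ hy)) -rpow_plus; [f_equal; ring|lra].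
have hy1 := rpow_gt0 y (p - 1) hy.
case: hx => hx; last first.
  rewrite -hx rpow_0 hyp; have := Rmult_lt_0_compat _ _ hy1 hy; nra.
set d := ln x - ln y.
have ex : x = y * exp d by rewrite /d exp_plus exp_Ropp !exp_ln //; field; lra.
have hxp : rpow x p = rpow y p * exp (p * d).
  rewrite ex rpow_mul; try lra; last by left; apply: exp_pos.
  by rewrite (rpow_pos _ _ (exp_pos d)) /Rpower ln_exp; f_equal; f_equal; ring.
have e1 : exp (p * d) = exp d * exp ((p - 1) * d) by rewrite -exp_plus; f_equal; ring.
have e2 : 1 = exp d * exp (- d) by rewrite -exp_plus; rewrite Rplus_opp_r exp_0.
have h1 := exp_ge1 ((p - 1) * d).
have h2 := exp_ge1 (- d).
have hd := exp_pos d.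
have h3 : exp d * (1 + (p - 1) * d) <= exp (p * d).
  by rewrite e1; apply: Rmult_le_compat_l; lra.
have h4 : exp d * (1 - d) <= 1.
  by rewrite e2; apply: Rmult_le_compat_l; lra.
have h5 : (p - 1) * (exp d * (1 - d)) <= (p - 1) * 1.
  by apply: Rmult_le_compat_l; lra.
have hE : 1 + p * (exp d - 1) <= exp (p * d) by nra.
rewrite hxp {1}ex hyp.
have hY : 0 < rpow y (p - 1) * y by nra.
nra.
Qed.
Lemma jensen (T : finType) (w g : T -> R) p : 1 < p ->
  (forall t, 0 <= w t) -> (forall t, 0 <= g t) ->
  rpow (rsum (fun t => w t * g t)) p <=
  rpow (rsum w) (p - 1) * rsum (fun t => w t * rpow (g t) p).
Proof.
move=> hp hw hg.
have hS1 : 0 <= rsum (fun t => w t * g t).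
  by apply: rsum_ge0 => t; apply: Rmult_le_pos.
have hR : 0 <= rpow (rsum w) (p - 1) * rsum (fun t => w t * rpow (g t) p).
  apply: Rmult_le_pos; first exact: rpow_ge0.
  by apply: rsum_ge0 => t; apply: Rmult_le_pos => //; apply: rpow_ge0.
case: hS1 => hS1; last by rewrite -hS1 rpow_0.
have hW0 : 0 <= rsum w by apply: rsum_ge0.
have hW : 0 < rsum w.
  case: hW0 => // hW0; exfalso.
  have h0 : forall t, w t = 0.
    move=> t; have := rsum_term w t hw; have := hw t; lra.
  move: hS1; rewrite (@rsum_ext _ _ (fun _ => 0)) ?rsum_const0; first lra.
  by move=> t; rewrite h0; ring.
set S1 := rsum (fun t => w t * g t) in hS1 *.
set W := rsum w in hW hW0 *.
set m := S1 / W.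
have hm : 0 < m by apply: Rdiv_lt_0_compat.
have key : forall t, w t * (rpow m p + p * rpow m (p - 1) * (g t - m)) <= w t * rpow (g t) p.
  by move=> t; apply: Rmult_le_compat_l => //; apply: tangent.
have := rsum_le _ _ key.
rewrite (@rsum_ext _ _ (fun t => w t * rpow m p + (p * rpow m (p - 1)) * (w t * g t - m * w t))); last first.
  by move=> t; ring.
rewrite rsum_plus rsum_scal rsum_minus rsum_scal rsum_scalr -/S1 -/W.
have -> : S1 - m * W = 0 by rewrite /m; field; lra.
move=> hkey.
have -> : S1 = W * m by rewrite /m; field; lra.
rewrite rpow_mul; try lra.
have -> : rpow W p = rpow W (p - 1) * W.
  by rewrite -{3}(rpow_1 W hW0) -rpow_plus //; f_equal; ring.
have := rpow_gt0 W (p - 1) hW.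
nra.
Qed.

Lemma two_point a b p : 1 < p -> 0 <= a -> 0 <= b ->
  rpow (a + b) p <= rpow 2 (p - 1) * (rpow a p + rpow b p).
Proof.
move=> hp ha hb.
have hR : 0 <= rpow 2 (p - 1) * (rpow a p + rpow b p).
  apply: Rmult_le_pos; first exact: rpow_ge0.
  have := rpow_ge0 a p; have := rpow_ge0 b p; lra.
have [hab|hab] : a + b = 0 \/ 0 < a + b by lra.
  by rewrite hab rpow_0.
set m := (a + b) / 2.
have hm : 0 < m by rewrite /m; lra.
have h1 := tangent _ _ _ ha hm hp.
have h2 := tangent _ _ _ hb hm hp.
have -> : a + b = 2 * m by rewrite /m; field.
rewrite rpow_mul; try lra.
have -> : rpow 2 p = rpow 2 (p - 1) * 2.
  by rewrite -{3}(rpow_1 2 ltac:(lra)) -rpow_plus; [f_equal; ring | lra].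
have hz : a + b - 2 * m = 0 by rewrite /m; field.
have e : p * rpow m (p - 1) * (a - m) + p * rpow m (p - 1) * (b - m) = 0.
  have -> : p * rpow m (p - 1) * (a - m) + p * rpow m (p - 1) * (b - m) =
            p * rpow m (p - 1) * (a + b - 2 * m) by ring.
  by rewrite hz; ring.
have h3 : 2 * rpow m p <= rpow a p + rpow b p by lra.
rewrite Rmult_assoc; apply: Rmult_le_compat_l; first exact: rpow_ge0.
lra.
Qed.
Lemma sum_ord_rsum (S : finType) (F : 'I_#|S| -> R) :
  \big[Rplus/0]_(k < #|S|) F k = rsum (fun s => F (enum_rank s)).
Proof.
rewrite /rsum (reindex enum_rank) //.
by apply: onW_bij; apply: enum_rank_bij.
Qed.

Section Kernel.
Variable S : finType.
Variable P : S -> S -> R.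
Variable gam : R.
Hypothesis HP0 : forall x y, 0 <= P x y.
Hypothesis HP1 : forall x, rsum (P x) = 1.
Hypothesis Hg : 0 <= gam < 1.

Definition Mk x y := delta x y - gam * P x y.
Definition Mf (f : S -> R) x := f x - gam * rsum (fun y => P x y * f y).

Lemma Mf_sum f x : rsum (fun y => Mk x y * f y) = Mf f x.
Proof.
rewrite /Mk /Mf (@rsum_ext _ _ (fun y => delta x y * f y + (- gam) * (P x y * f y))).
  by rewrite rsum_plus rsum_delta rsum_scal; ring.
by move=> y; ring.
Qed.

Lemma maxp f : (forall x, 0 <= Mf f x) -> forall x, 0 <= f x.
Proof.
move=> H x0; have [m Hm] := ex_argmin f x0.
suff : 0 <= f m by have := Hm x0; lra.
have := H m; rewrite /Mf => h.
have : rsum (fun y => P m y * f m) <= rsum (fun y => P m y * f y).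
  by apply: rsum_le => y; apply: Rmult_le_compat_l.
rewrite rsum_scalr HP1 => h2.
have : gam * (1 * f m) <= gam * rsum (fun y => P m y * f y).
  by apply: Rmult_le_compat_l; lra.
nra.
Qed.

Lemma Mf_inj f : (forall x, Mf f x = 0) -> forall x, f x = 0.
Proof.
move=> H x.
have h1 := maxp f (fun x => Req_le_sym _ _ (H x)) x.
have h2 : 0 <= - f x.
  apply: (maxp (fun x => - f x)) => y.
  rewrite /Mf (@rsum_ext _ _ (fun z => - (P y z * f z))) ?rsum_opp; last by move=> z; ring.
  have := H y; rewrite /Mf; lra.
lra.
Qed.

Lemma inv_ex : exists B : S -> S -> R,
  (forall x y, rsum (fun z => Mk x z * B z y) = delta x y) /\
  (forall x y, rsum (fun z => B x z * Mk z y) = delta x y).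
Proof.
pose Mm : 'M[R]_#|S| := (\matrix_(i, j) Mk (enum_val i) (enum_val j))%R.
have Hu : Mm \in unitmx.
  rewrite -unitmx_tr -row_free_unit -kermx_eq0.
  set K := kermx _.
  have HK : (K *m Mm^T)%R = 0%R by apply: mulmx_ker.
  clearbody K.
  apply/eqP/matrixP => i j; rewrite mxE.
  have Hr : (row i K *m Mm^T)%R = 0%R by rewrite -row_mul HK row0.
  pose f (s : S) := row i K ord0 (enum_rank s).
  have Hf : forall s, Mf f s = 0.
    move=> s; rewrite -Mf_sum.
    have := congr1 (fun A : 'M_(1, #|S|) => A ord0 (enum_rank s)) Hr.
    rewrite /= mxE [in RHS]mxE sum_ord_rsum => h.
    apply: eq_trans h; apply: rsum_ext => z; rewrite !mxE !enum_rankK /f mxE; exact: Rmult_comm.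
  have := Mf_inj f Hf (enum_val j).
  by rewrite /f enum_valK mxE.
exists (fun x y => invmx Mm (enum_rank x) (enum_rank y)); split => x y.
- have := congr1 (fun A : 'M_#|S| => A (enum_rank x) (enum_rank y)) (mulmxV Hu).
  rewrite /= mxE mxE sum_ord_rsum (inj_eq enum_rank_inj) /delta.
  case: eqP => _ h; (apply: eq_trans _ h; apply: rsum_ext => z; rewrite mxE !enum_rankK //).

- have := congr1 (fun A : 'M_#|S| => A (enum_rank x) (enum_rank y)) (mulVmx Hu).
  rewrite /= mxE mxE sum_ord_rsum (inj_eq enum_rank_inj) /delta.
  case: eqP => _ h; (apply: eq_trans _ h; apply: rsum_ext => z; rewrite mxE !enum_rankK //).

Qed.

Definition Rk := minv Mk.
Lemma Rk_spec :
  (forall x y, rsum (fun z => Mk x z * Rk z y) = delta x y) /\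
  (forall x y, rsum (fun z => Rk x z * Mk z y) = delta x y).
Proof.
rewrite /Rk /minv.
apply: (epsilon_spec (inhabits (fun _ _ => 0)) (fun B : S -> S -> R =>
    (forall x y, rsum (fun z => Mk x z * B z y) = delta x y) /\
    (forall x y, rsum (fun z => B x z * Mk z y) = delta x y))).
exact: inv_ex.
Qed.

Definition Rapp (g : S -> R) x := rsum (fun y => Rk x y * g y).

Lemma Mf_Rapp g x : Mf (Rapp g) x = g x.
Proof.
rewrite -Mf_sum /Rapp.
rewrite (@rsum_ext _ _ (fun y => rsum (fun z => Mk x y * Rk y z * g z))); last first.
  by move=> y; rewrite -rsum_scal; apply: rsum_ext => z; ring.
rewrite rsum_swap (@rsum_ext _ _ (fun z => delta x z * g z)) ?rsum_delta //.
by move=> z; rewrite -(proj1 Rk_spec) -rsum_scalr.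
Qed.

Lemma Rapp_Mf f x : Rapp (Mf f) x = f x.
Proof.
rewrite /Rapp.
rewrite (@rsum_ext _ _ (fun y => rsum (fun z => Rk x y * Mk y z * f z))); last first.
  by move=> y; rewrite -Mf_sum -rsum_scal; apply: rsum_ext => z; ring.
rewrite rsum_swap (@rsum_ext _ _ (fun z => delta x z * f z)) ?rsum_delta //.
by move=> z; rewrite -(proj2 Rk_spec) -rsum_scalr.
Qed.

Lemma Rk_ge0 x y : 0 <= Rk x y.
Proof.
apply: (maxp (fun x => Rk x y)) => z.
rewrite -Mf_sum (proj1 Rk_spec) /delta; case: eqP => _; lra.
Qed.

Lemma Rk_rowsum x : rsum (Rk x) * (1 - gam) = 1.
Proof.
have := Rapp_Mf (fun _ => 1) x.
rewrite /Rapp (@rsum_ext _ _ (fun y => Rk x y * (1 - gam))) ?rsum_scalr //.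
move=> y; rewrite /Mf (@rsum_ext _ _ (P y)) ?HP1; first ring.
by move=> z; ring.
Qed.

Lemma Rapp_mono g h x : (forall y, g y <= h y) -> Rapp g x <= Rapp h x.
Proof.
move=> H; apply: rsum_le => y; apply: Rmult_le_compat_l => //; exact: Rk_ge0.
Qed.

Lemma Rk_rowsum' x : rsum (Rk x) = / (1 - gam).
Proof. have h := Rk_rowsum x; apply: (Rmult_eq_reg_r (1 - gam)); last lra. rewrite h; field; lra. Qed.

Lemma Rk_le x y : Rk x y * (1 - gam) <= 1.
Proof.
apply: Rle_trans (Rmult_le_compat_r (1 - gam) _ _ _ _) (Req_le _ _ (Rk_rowsum x)); first lra.
apply: rsum_term => z; exact: Rk_ge0.
Qed.

Lemma Rapp_pow (mu g : S -> R) p : 1 < p -> (forall s, 0 <= mu s) -> (forall y, 0 <= g y) ->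
  rsum (fun s => mu s * rpow (Rapp g s) p) <=
  rpow (/ (1 - gam)) (p - 1) *
    rsum (fun y => rsum (fun s => mu s * Rk s y) * rpow (g y) p).
Proof.
move=> hp hmu hg.
have H : forall s, mu s * rpow (Rapp g s) p <=
   mu s * (rpow (/ (1 - gam)) (p - 1) * rsum (fun y => Rk s y * rpow (g y) p)).
  move=> s; apply: Rmult_le_compat_l => //.
  rewrite -(Rk_rowsum' s); apply: jensen => // y; exact: Rk_ge0.
apply: Rle_trans (rsum_le _ _ H) _; right.
rewrite (@rsum_ext _ _ (fun s => rpow (/ (1 - gam)) (p - 1) *
     rsum (fun y => mu s * Rk s y * rpow (g y) p))); last first.
  by move=> s; rewrite -rsum_scal; rewrite -[in RHS]rsum_scal; rewrite -rsum_scal;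
     apply: rsum_ext => y; ring.
rewrite rsum_scal rsum_swap; f_equal; apply: rsum_ext => y.
by rewrite -rsum_scalr.
Qed.
End Kernel.
Arguments Mk {S}. Arguments Mf {S}. Arguments Rk {S}. Arguments Rapp {S}.
Arguments Mf_sum {S}. Arguments maxp {S P gam}. Arguments Mf_inj {S P gam}. Arguments inv_ex {S P gam}.
Arguments Rk_spec {S P gam}. Arguments Mf_Rapp {S P gam}. Arguments Rapp_Mf {S P gam}. Arguments Rk_ge0 {S P gam}.
Arguments Rk_rowsum {S P gam}. Arguments Rk_rowsum' {S P gam}. Arguments Rk_le {S P gam}. Arguments Rapp_pow {S P gam}.
Arguments Rapp_mono {S P gam}.
Lemma sum_prod_dffun (I : finType) (T_ : I -> finType) (f : forall i, T_ i -> R) :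
  \big[Rplus/0]_(a : {dffun forall i, T_ i}) \big[Rmult/1]_(i : I) f i (a i) =
  \big[Rmult/1]_(i : I) \big[Rplus/0]_(x : T_ i) f i x.
Proof.
rewrite (reindex (@dffun_of_fprod I T_)) /=; last exact/onW_bij/dffun_of_fprod_bij.
rewrite (@eq_bigr _ _ _ _ _ _ _ (fun t : fprod T_ => \big[Rmult/1]_(i in I) [ffun x => f i x] (t i))); last first.
  by move=> t _; apply: eq_bigr => i _; rewrite !ffunE.
rewrite big_fprod.
rewrite -(bigA_distr_big_dep (tagged_with (fun x : I => T_ x)) (fun i j => untag 0 [ffun x => f i x] j)).
apply: eq_bigr => i _.
rewrite (@eq_bigr _ _ _ _ _ _ (f i) (fun x => [ffun x => f i x] x)); last by move=> x _; rewrite ffunE.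
rewrite (big_tag (fun i => [ffun x => f i x]) i).
apply: eq_bigl => j; by [].
Qed.
Lemma Mf_minus (S : finType) (P : S -> S -> R) gam f g x :
  Mf P gam (fun x => f x - g x) x = Mf P gam f x - Mf P gam g x.
Proof.
rewrite /Mf (@rsum_ext _ _ (fun y => P x y * f y - P x y * g y)) ?rsum_minus; first ring.
by move=> y; ring.
Qed.

Lemma bigmax_ge (T : finType) (F : T -> R) t : F t <= \big[Rmax/0]_(s : T) F s.
Proof.
move: (mem_index_enum t); elim: (index_enum T) => // x r IH.
rewrite inE big_cons => /orP [/eqP ->|/IH h]; first exact: Rmax_l.
by apply: Rle_trans h (Rmax_r _ _).
Qed.

Lemma bigmax_le (T : finType) (F : T -> R) B : 0 <= B -> (forall t, F t <= B) ->
  \big[Rmax/0]_(s : T) F s <= B.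
Proof. move=> h0 h; elim/big_ind: _ => // x y; exact: Rmax_lub. Qed.

Lemma bigmax_ge0 (T : finType) (F : T -> R) : 0 <= \big[Rmax/0]_(s : T) F s.
Proof.
elim: (index_enum T) => [|x r IH]; first by rewrite big_nil; lra.
by rewrite big_cons; apply: Rle_trans IH (Rmax_r _ _).
Qed.

Section Game2.
Variables (N : nat) (S : finType) (A : 'I_N -> S -> finType) (G : game N S A).
Hypothesis HG : valid_game G.

Let hg : 0 <= discount G < 1 := proj2 (proj2 HG).

Definition validq (q : forall s, joint A s -> R) :=
  forall s, (forall a, 0 <= q s a) /\ rsum (q s) = 1.

Lemma Pq_ge0 q : validq q -> forall x y, 0 <= Pq G q x y.
Proof.
move=> hq x y; apply: rsum_ge0 => a; apply: Rmult_le_pos; first by case: (hq x).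
by case: (proj1 (proj2 HG) x a) => h _; apply: h.
Qed.

Lemma Pq_sum q : validq q -> forall x, rsum (Pq G q x) = 1.
Proof.
move=> hq x; rewrite /Pq.
rewrite (@rsum_swap _ _ (fun y a => q x a * trans G x a y)).
rewrite (@rsum_ext _ _ (q x)); first by case: (hq x).
move=> a; rewrite rsum_scal; case: (proj1 (proj2 HG) x a) => _ ->; ring.
Qed.

Definition Tq q i (v : S -> R) s := rq G q i s + discount G * rsum (fun s' => Pq G q s s' * v s').

Section Q.
Variable q : forall s, joint A s -> R.
Hypothesis hq : validq q.
Let P0 := Pq_ge0 q hq.
Let P1 := Pq_sum q hq.

Lemma val_Mf i x : Mf (Pq G q) (discount G) (valueq G q i) x = rq G q i x.
Proof. exact: (Mf_Rapp P0 P1 hg). Qed.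

Lemma val_fix i x : Tq q i (valueq G q i) x = valueq G q i x.
Proof. have := val_Mf i x; rewrite /Mf /Tq; lra. Qed.

Lemma val_cmp i w : (forall s, Tq q i w s <= w s) -> forall s, valueq G q i s <= w s.
Proof.
move=> H s.
suff : 0 <= w s - valueq G q i s by lra.
apply: (maxp P0 P1 hg (fun s => w s - valueq G q i s)) => x.
rewrite Mf_minus val_Mf; have := H x; rewrite /Tq /Mf; lra.
Qed.

Lemma val_diff i v s : valueq G q i s - v s = Rapp (Pq G q) (discount G) (fun s => Tq q i v s - v s) s.
Proof.
rewrite -(Rapp_Mf P0 P1 hg (fun s => valueq G q i s - v s)).
apply: rsum_ext => y; f_equal.
rewrite Mf_minus val_Mf /Tq /Mf; ring.
Qed.
End Q.
Implicit Types pi : jstrategy A.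

Definition upd (pi : jstrategy A) (i : 'I_N) (sg : strategy A i) : jstrategy A :=
  fun j => match i =P j with ReflectT e => eq_rect i (strategy A) sg j e | ReflectF _ => pi j end.
Arguments upd pi {i} sg.

Lemma upd_i pi i (sg : strategy A i) : upd pi sg i = sg.
Proof. rewrite /upd; case: eqP => // e; by rewrite (eq_irrelevance e erefl). Qed.

Lemma upd_j pi i (sg : strategy A i) j : j != i -> upd pi sg j = pi j.
Proof. move=> h; rewrite /upd; case: eqP => // e; by rewrite e eqxx in h. Qed.

Lemma jprob_split pi i s (a : joint A s) :
  jprob pi a = pi i s (a i) * \big[Rmult/1]_(j : 'I_N | j != i) pi j s (a j).
Proof. by rewrite /jprob (bigD1 i). Qed.

Lemma jprob_upd pi i (sg : strategy A i) s (a : joint A s) : jprob (upd pi sg) a = devprob pi sg a.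
Proof.
rewrite (jprob_split _ i) upd_i /devprob; f_equal.
by apply: eq_bigr => j hj; rewrite upd_j.
Qed.

Lemma jprob_dev pi i : jprob pi = devprob pi (pi i).
Proof.
apply: functional_extensionality_dep => s; apply: functional_extensionality => a.
by rewrite (jprob_split _ i).
Qed.

Lemma jprob_valid pi : is_jstrategy pi -> validq (jprob pi).
Proof.
move=> hpi s; split.
  move=> a; rewrite /jprob; elim/big_ind: _ => //; first lra.
    by move=> x y; apply: Rmult_le_pos.
  by move=> j _; case: (hpi j s) => h _; apply: h.
rewrite /rsum /jprob.
transitivity (\big[Rmult/1]_(j : 'I_N) \big[Rplus/0]_(x : A j s) pi j s x).
  exact: (sum_prod_dffun _ (fun j => A j s) (fun j x => pi j s x)).
rewrite big1 // => j _.
by case: (hpi j s).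
Qed.

Lemma upd_valid pi i (sg : strategy A i) : is_jstrategy pi -> is_strategy sg -> is_jstrategy (upd pi sg).
Proof.
move=> hpi hsg j; case: (eqVneq j i) => [->|h]; first by rewrite upd_i.
by rewrite upd_j.
Qed.

Lemma dev_valid pi i (sg : strategy A i) : is_jstrategy pi -> is_strategy sg -> validq (devprob pi sg).
Proof.
move=> hpi hsg s.
have h := jprob_valid _ (upd_valid _ _ _ hpi hsg) s.
split; first by move=> a; rewrite -jprob_upd; case: h.
by rewrite (@rsum_ext _ _ (jprob (upd pi sg) (s := s))); [case: h | move=> a; rewrite jprob_upd].
Qed.

Lemma sum_ind i s (F : A i s -> joint A s -> R) :
  rsum (fun ai => rsum (fun a : joint A s => if a i == ai then F ai a else 0)) =
  rsum (fun a : joint A s => F (a i) a).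
Proof.
rewrite rsum_swap; apply: rsum_ext => a.
rewrite /rsum (bigD1 (a i)) //= eqxx big1 ?Rplus_0_r // => ai.
by rewrite eq_sym => /negPf ->.
Qed.

Definition Xv pi i s (v : S -> R) (ai : A i s) :=
  rdev G pi ai + discount G * rsum (fun s' => Pdev G pi ai s' * v s').
Arguments Xv pi {i s} v ai.

Lemma Tq_dev pi i (sg : strategy A i) v s :
  Tq (devprob pi sg) i v s = rsum (fun ai => sg s ai * Xv pi v ai).
Proof.
rewrite /Tq /Xv.
rewrite (@rsum_ext _ _ (fun ai => sg s ai * rdev G pi ai + discount G *
   rsum (fun s' => sg s ai * Pdev G pi ai s' * v s'))); last first.
  by move=> ai; rewrite -rsum_scal; rewrite Rmult_plus_distr_l; f_equal;
     rewrite -rsum_scal -rsum_scal; apply: rsum_ext => s'; ring.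
rewrite rsum_plus rsum_scal rsum_swap.
f_equal.
  rewrite /rq /rdev.
  rewrite (@rsum_ext _ _ (fun ai => rsum (fun a : joint A s => if a i == ai then
      sg s ai * \big[Rmult/1]_(j : 'I_N | j != i) pi j s (a j) * rew G i s a else 0))).
    rewrite sum_ind; apply: rsum_ext => a; rewrite /devprob; ring.
  move=> ai; rewrite -rsum_scal; apply: rsum_ext => a; case: eqP => _; ring.
f_equal; apply: rsum_ext => s'.
rewrite (rsum_scalr (fun ai => sg s ai * Pdev G pi ai s') (v s')); f_equal.
rewrite /Pq /Pdev.
rewrite (@rsum_ext _ _ (fun ai => rsum (fun a : joint A s => if a i == ai then
      sg s ai * \big[Rmult/1]_(j : 'I_N | j != i) pi j s (a j) * trans G s a s' else 0))).
  rewrite sum_ind; apply: rsum_ext => a; rewrite /devprob; ring.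
move=> ai; rewrite -rsum_scal; apply: rsum_ext => a; case: eqP => _; ring.
Qed.

Lemma Xv_le_star pi i s v (ai : A i s) : Xv pi v ai <= bellman_star G pi i v s.
Proof.
have [m Hm] := ex_argmax (fun ai => Xv pi v ai) ai.
apply: (@Rsup_ge _ (Xv pi v m)); last by exists ai.
by move=> y [a ->]; exact: Hm a.
Qed.

Lemma sg_avg i s (sg : strategy A i) (F : A i s -> R) c :
  is_strategy sg -> (forall ai, F ai <= c) -> rsum (fun ai => sg s ai * F ai) <= c.
Proof.
move=> hsg H; case: (hsg s) => h0 h1.
apply: Rle_trans (rsum_le _ (fun ai => sg s ai * c) _) _.
  by move=> ai; apply: Rmult_le_compat_l.
by rewrite rsum_scalr h1; lra.
Qed.

Lemma Tq_le_star pi i (sg : strategy A i) v s : is_strategy sg ->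
  Tq (devprob pi sg) i v s <= bellman_star G pi i v s.
Proof.
move=> hsg; rewrite Tq_dev; apply: sg_avg => // ai; exact: Xv_le_star.
Qed.

Definition det i (d : {dffun forall s, A i s}) : strategy A i := fun s a => delta a (d s).
Arguments det {i}.

Lemma det_valid i (d : {dffun forall s, A i s}) : is_strategy (det d).
Proof.
move=> s; split.
  by move=> a; rewrite /det /delta; case: eqP => _; lra.
rewrite (@rsum_ext _ _ (fun a => 1 * delta a (d s))) ?rsum_delta' // => a.
rewrite /det; ring.
Qed.

Lemma Tq_det pi i (d : {dffun forall s, A i s}) v s :
  Tq (devprob pi (det d)) i v s = Xv pi v (d s).
Proof.
rewrite Tq_dev (@rsum_ext _ _ (fun a => Xv pi v a * delta a (d s))) ?rsum_delta' // => a.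
rewrite /det; ring.
Qed.

Lemma opt pi i : is_jstrategy pi -> exists d : {dffun forall s, A i s},
  forall sg : strategy A i, is_strategy sg -> forall s,
    valueq G (devprob pi sg) i s <= valueq G (devprob pi (det d)) i s.
Proof.
move=> hpi.
have ex s : exists x : A i s, true.
  by case/card_gt0P: (proj1 HG i s) => x _; exists x.
pose d0 : {dffun forall s, A i s} := [ffun s => xchoose (ex s)].
pose V := fun d : {dffun forall s, A i s} => valueq G (devprob pi (det d)) i.
have [ds Hds] := ex_argmax (fun d => rsum (V d)) d0.
pose w := V ds.
have hv (d : {dffun forall s, A i s}) : validq (devprob pi (det d)) := dev_valid _ _ _ hpi (det_valid _ d).
have exg s : exists a : A i s, forall b, Xv pi w b <= Xv pi w a := ex_argmax _ (xchoose (ex s)).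
pose d' : {dffun forall s, A i s} :=
  [ffun s => proj1_sig (constructive_indefinite_description _ (exg s))].
have hd' s (b : A i s) : Xv pi w b <= Xv pi w (d' s).
  rewrite /d' ffunE; case: (constructive_indefinite_description _ (exg s)) => a ha /=; exact: ha.
have wfix s : Xv pi w (ds s) = w s by rewrite -Tq_det val_fix.
pose h s := Xv pi w (d' s) - w s.
have h0 s : 0 <= h s by have := hd' s (ds s); rewrite wfix /h; lra.
have Hu : forall s, 0 <= V d' s - w s - h s.
  apply: (maxp (Pq_ge0 _ (hv d')) (Pq_sum _ (hv d')) hg (fun s => V d' s - w s - h s)) => x.
  rewrite !Mf_minus val_Mf //.
  have e := Tq_det pi i d' w x; rewrite /Tq in e.
  have hpos : 0 <= discount G * (rsum (fun y => Pq G (devprob pi (det d')) x y * Xv pi w (d' y))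
                   - rsum (fun y => Pq G (devprob pi (det d')) x y * w y)).
    rewrite -rsum_minus; apply: Rmult_le_pos; first lra.
    apply: rsum_ge0 => y; rewrite -Rmult_minus_distr_l; apply: Rmult_le_pos.
      exact: Pq_ge0.
    exact: h0 y.
  rewrite /Mf /h; lra.
have s1 : rsum (V d') <= rsum w := Hds d'.
have s2 : rsum (fun s => w s + h s) <= rsum (V d').
  by apply: rsum_le => s; have := Hu s; lra.
rewrite rsum_plus in s2.
have hz s : h s <= 0 by have := rsum_term h s h0; lra.
exists ds => sg hsg.
apply: (val_cmp _ (dev_valid _ _ _ hpi hsg)) => s.
rewrite Tq_dev; apply: sg_avg => // b; change (Xv pi w b <= w s).
have := hd' s b; have := hz s; rewrite /h; lra.
Qed.

Section Conc.
Variables (mu nu : S -> R).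
Hypothesis Hmu : is_distr mu.
Hypothesis Hnu : is_distr nu.
Hypothesis Hnupos : forall s, 0 < nu s.

Lemma Cpi_bound pi : is_jstrategy pi -> Cinf_pi G mu nu pi <= rsum (fun s => / nu s).
Proof.
move=> hpi.
have hq := jprob_valid _ hpi.
have hpos : forall s, 0 <= / nu s by move=> s; left; apply: Rinv_0_lt_compat.
apply: bigmax_le; first exact: rsum_ge0.
move=> y; apply: Rle_trans (rsum_term _ y hpos).
rewrite /Rdiv; rewrite -{2}(Rmult_1_l (/ nu y)); apply: Rmult_le_compat_r => //.
rewrite -rsum_scal.
case: Hmu => hm0 hm1; apply: (Rle_trans _ (rsum mu)); last by rewrite hm1; lra.
apply: rsum_le => s0.
have := Rk_le (Pq_ge0 _ hq) (Pq_sum _ hq) hg s0 y.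
have := hm0 s0; rewrite /resolvent /Rk /Mk; nra.
Qed.

Lemma Cinf_ge pi : is_jstrategy pi -> Cinf_pi G mu nu pi <= Cinf G mu nu.
Proof.
move=> hpi; apply: (@Rsup_ge _ (rsum (fun s => / nu s))).
  by move=> x [pi' [h ->]]; exact: Cpi_bound.
by exists pi.
Qed.

Lemma Cinf_col pi y : is_jstrategy pi ->
  rsum (fun s0 => mu s0 * Rk (Pq G (jprob pi)) (discount G) s0 y) <=
  Cinf G mu nu * nu y / (1 - discount G).
Proof.
move=> hpi.
have h1 := Rle_trans _ _ _ (bigmax_ge _ (fun s => (1 - discount G) *
     rsum (fun s0 => mu s0 * resolvent G (jprob pi) s0 s) / nu s) y) (Cinf_ge _ hpi).
have hy := Hnupos y.
set X := rsum _ in h1 *.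
have : (1 - discount G) * X <= Cinf G mu nu * nu y.
  have -> : (1 - discount G) * X = ((1 - discount G) * X / nu y) * nu y by field; lra.
  by apply: Rmult_le_compat_r; lra.
move=> h2.
have -> : X = ((1 - discount G) * X) / (1 - discount G) by field; lra.
rewrite /Rdiv; apply: Rmult_le_compat_r; last exact: h2.
by left; apply: Rinv_0_lt_compat; lra.
Qed.

Lemma kernel_bound q (hq : validq q) C p (hp : 1 < p)
  (Hc : forall y, rsum (fun s0 => mu s0 * Rk (Pq G q) (discount G) s0 y) <= C * nu y / (1 - discount G))
  g (hg0 : forall y, 0 <= g y) :
  rsum (fun s => mu s * rpow (Rapp (Pq G q) (discount G) g s) p) <=
  rpow (/ (1 - discount G)) p * C * rsum (fun y => nu y * rpow (g y) p).
Proof.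
case: Hmu => hm0 _.
apply: Rle_trans (Rapp_pow (Pq_ge0 _ hq) (Pq_sum _ hq) hg mu g p hp hm0 hg0) _.
have hK : 0 <= rpow (/ (1 - discount G)) (p - 1) by apply: rpow_ge0.
apply: Rle_trans (Rmult_le_compat_l _ _ _ hK (rsum_le _
   (fun y => C * nu y / (1 - discount G) * rpow (g y) p) _)) _.
  move=> y; apply: Rmult_le_compat_r; [exact: rpow_ge0 | exact: Hc].
right.
have hi : 0 <= / (1 - discount G) by left; apply: Rinv_0_lt_compat; lra.
have -> : rpow (/ (1 - discount G)) p = rpow (/ (1 - discount G)) (p - 1) * / (1 - discount G).
  by rewrite -{3}(rpow_1 _ hi) -rpow_plus //; f_equal; ring.
rewrite (@rsum_ext _ _ (fun y => (C / (1 - discount G)) * (nu y * rpow (g y) p))); last first.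
  by move=> y; rewrite /Rdiv; ring.
rewrite rsum_scal /Rdiv; ring.
Qed.
End Conc.

Lemma Rapp_opp (P : S -> S -> R) gam f s : Rapp P gam (fun y => - f y) s = - Rapp P gam f s.
Proof.
rewrite /Rapp -rsum_opp; apply: rsum_ext => y; ring.
Qed.

Lemma player (mu nu : S -> R) (Hmu : is_distr mu) (Hnu : is_distr nu)
  (Hnupos : forall s, 0 < nu s) pi (hpi : is_jstrategy pi) i (v : S -> R) p (hp : 1 < p) :
  rsum (fun s => mu s * rpow (Rabs (brvalue G pi i s - value G pi i s)) p) <=
  rpow 2 (p - 1) * (rpow (/ (1 - discount G)) p * Cinf G mu nu) *
  (rsum (fun s => nu s * rpow (Rabs (bellman_star G pi i v s - v s)) p) +
   rsum (fun s => nu s * rpow (Rabs (bellman G pi i v s - v s)) p)).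
Proof.
have [d Hd] := opt pi i hpi.
pose qd := devprob pi (det d).
have hqd : validq qd := dev_valid _ _ _ hpi (det_valid _ d).
pose qp := jprob pi.
have hqp : validq qp := jprob_valid _ hpi.
pose w := valueq G qd i.
have Hbr s : brvalue G pi i s = w s.
  rewrite /brvalue; apply: Rsup_lub; split.
    by move=> x [sg [hsg ->]]; exact: Hd.
  move=> b hb; apply: hb; exists (det d); split => //; exact: det_valid.
have Hval s : value G pi i s = valueq G (devprob pi (pi i)) i s.
  by rewrite /value (jprob_dev pi i).
have Hle s : value G pi i s <= w s by rewrite Hval; exact: Hd.
pose g s := Rabs (bellman_star G pi i v s - v s).
pose h s := Rabs (bellman G pi i v s - v s).
have g0 s : 0 <= g s by apply: Rabs_pos.
have h0 s : 0 <= h s by apply: Rabs_pos.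
pose a s := Rapp (Pq G qd) (discount G) g s.
pose b s := Rapp (Pq G qp) (discount G) h s.
have a0 s : 0 <= a s.
  apply: rsum_ge0 => y; apply: Rmult_le_pos => //; exact: (Rk_ge0 (Pq_ge0 _ hqd) (Pq_sum _ hqd) hg).
have b0 s : 0 <= b s.
  apply: rsum_ge0 => y; apply: Rmult_le_pos => //; exact: (Rk_ge0 (Pq_ge0 _ hqp) (Pq_sum _ hqp) hg).
have Ha s : w s - v s <= a s.
  rewrite /w val_diff //; apply: (Rapp_mono (Pq_ge0 _ hqd) (Pq_sum _ hqd) hg) => y.
  have := Tq_le_star pi i (det d) v y (det_valid _ d).
  have := Rle_abs (bellman_star G pi i v y - v y); rewrite /g /qd; lra.
have Hb s : v s - value G pi i s <= b s.
  have e := val_diff qp hqp i v s.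
  rewrite /value -/qp.
  have -> : v s - valueq G qp i s = Rapp (Pq G qp) (discount G) (fun y => - (Tq qp i v y - v y)) s.
    by rewrite Rapp_opp -e; ring.
  apply: (Rapp_mono (Pq_ge0 _ hqp) (Pq_sum _ hqp) hg) => y.
  have := Rle_abs (- (bellman G pi i v y - v y)); rewrite Rabs_Ropp /h.
  rewrite /bellman /Tq /qp; exact: id.
have Hpt s : rpow (Rabs (brvalue G pi i s - value G pi i s)) p <=
             rpow 2 (p - 1) * (rpow (a s) p + rpow (b s) p).
  apply: Rle_trans (two_point _ _ _ hp (a0 s) (b0 s)).
  apply: rpow_le; last lra.
  rewrite Hbr Rabs_right; last by have := Hle s; lra.
  split; [have := Hle s; lra | have := Ha s; have := Hb s; lra].
have Hcd : forall y, rsum (fun s0 => mu s0 * Rk (Pq G qd) (discount G) s0 y) <=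
    Cinf G mu nu * nu y / (1 - discount G).
  move=> y; have := Cinf_col mu nu Hmu Hnupos _ y (upd_valid _ _ _ hpi (det_valid _ d)).
  suff -> : jprob (upd pi (det d)) = qd by [].
  apply: functional_extensionality_dep => s; apply: functional_extensionality => x.
  exact: jprob_upd.
have Hcp : forall y, rsum (fun s0 => mu s0 * Rk (Pq G qp) (discount G) s0 y) <=
    Cinf G mu nu * nu y / (1 - discount G).
  by move=> y; apply: (Cinf_col mu nu Hmu Hnupos _ y hpi).
have K1 := kernel_bound mu nu Hmu qd hqd _ p hp Hcd g g0.
have K2 := kernel_bound mu nu Hmu qp hqp _ p hp Hcp h h0.
case: Hmu => hm0 _.
apply: Rle_trans (rsum_le _ (fun s => rpow 2 (p - 1) * (mu s * rpow (a s) p + mu s * rpow (b s) p)) _) _.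
  move=> s; have := Hpt s; have := hm0 s.
  have := rpow_ge0 2 (p - 1); nra.
rewrite rsum_scal rsum_plus.
have h2 := rpow_ge0 2 (p - 1).
rewrite Rmult_assoc; apply: Rmult_le_compat_l => //.
rewrite Rmult_plus_distr_l.
apply: Rplus_le_compat; [exact: K1 | exact: K2].
Qed.

Lemma pnorm_pow (T : finType) (m f : T -> R) p : 0 < p -> (forall t, 0 <= m t) ->
  rpow (pnorm m p f) p = rsum (fun s => m s * rpow (Rabs (f s)) p).
Proof.
move=> hp hm; rewrite /pnorm rpow_mult.
  have -> : 1 / p * p = 1 by field; lra.
  apply: rpow_1; apply: rsum_ge0 => t; apply: Rmult_le_pos => //; exact: rpow_ge0.
apply: rsum_ge0 => t; apply: Rmult_le_pos => //; exact: rpow_ge0.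
Qed.

Lemma main (p p' : R) (Hp : 1 < p) (Hp' : 1 < p') (Hpp' : 1 / p + 1 / p' = 1)
  (mu nu : S -> R) (Hmu : is_distr mu) (Hnu : is_distr nu) (Hnupos : forall s, 0 < nu s)
  (rho : 'I_N -> R) (Hrho : is_distr rho)
  (pi : jstrategy A) (Hpi : is_jstrategy pi)
  (v : 'I_N -> S -> R) :
  rpow (rsum (fun i => rho i *
          rpow (pnorm mu p (fun s => brvalue G pi i s - value G pi i s)) p)) (1 / p)
  <= rpow 2 (1 / p') * rpow (Cinf G mu nu) (1 / p) / (1 - discount G) *
     rpow (rsum (fun i => rho i *
          (rpow (pnorm nu p (fun s => bellman_star G pi i (v i) s - v i s)) p +
           rpow (pnorm nu p (fun s => bellman G pi i (v i) s - v i s)) p))) (1 / p).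
Proof.
have hp0 : 0 < p by lra.
case: (Hmu) => hm0 _; case: (Hnu) => hn0 _; case: (Hrho) => hr0 _.
set L := rsum _.
set X := rsum _.
pose C := Cinf G mu nu.
pose K0 := rpow (/ (1 - discount G)) p.
pose K := rpow 2 (p - 1) * (K0 * C).
have HL : L <= K * X.
  rewrite /L /X -rsum_scal; apply: rsum_le => i.
  rewrite !pnorm_pow //.
  have := player mu nu Hmu Hnu Hnupos pi Hpi i (v i) p Hp.
  have := hr0 i; rewrite /K /K0 /C => h1 h2.
  have := Rmult_le_compat_l _ _ _ h1 h2; move=> h3.
  by apply: Rle_trans h3 _; right; ring.
have L0 : 0 <= L.
  apply: rsum_ge0 => i; apply: Rmult_le_pos => //; exact: rpow_ge0.
have X0 : 0 <= X.
  apply: rsum_ge0 => i; apply: Rmult_le_pos => //.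
  by apply: Rplus_le_le_0_compat; apply: rpow_ge0.
have C0 : 0 <= C.
  exact: Rle_trans (bigmax_ge0 _ _) (Cinf_ge mu nu Hmu Hnupos _ Hpi).
have hi : 0 <= / (1 - discount G) by left; apply: Rinv_0_lt_compat; lra.
have K00 : 0 <= K0 by apply: rpow_ge0.
have K20 : 0 <= rpow 2 (p - 1) by apply: rpow_ge0.
apply: Rle_trans (rpow_le L (K * X) (1 / p) (conj L0 HL) _) _.
  apply: Rdiv_lt_0_compat; lra.
rewrite /K rpow_mul //; last by apply: Rmult_le_pos => //; apply: Rmult_le_pos.
rewrite rpow_mul //; last exact: Rmult_le_pos.
rewrite rpow_mul //.
rewrite /K0 !rpow_mult //; last lra.
have ep : 1 / p' = 1 - 1 / p by lra.
have -> : (p - 1) * (1 / p) = 1 / p' by rewrite ep; field; lra.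
have -> : p * (1 / p) = 1 by field; lra.
rewrite rpow_1 //.
right; rewrite /C /Rdiv; ring.
Qed.
End Game2.

Theorem theorem1 (N : nat) (S : finType) (A : 'I_N -> S -> finType)
  (G : game N S A) (HG : valid_game G)
  (p p' : R) (Hp : 1 < p) (Hp' : 1 < p') (Hpp' : 1 / p + 1 / p' = 1)
  (mu nu : S -> R) (Hmu : is_distr mu) (Hnu : is_distr nu) (Hnupos : forall s, 0 < nu s)
  (rho : 'I_N -> R) (Hrho : is_distr rho)
  (pi : jstrategy A) (Hpi : is_jstrategy pi)
  (v : 'I_N -> S -> R) :
  rpow (rsum (fun i => rho i *
          rpow (pnorm mu p (fun s => brvalue G pi i s - value G pi i s)) p)) (1 / p)
  <= rpow 2 (1 / p') * rpow (Cinf G mu nu) (1 / p) / (1 - discount G) *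
     rpow (rsum (fun i => rho i *
          (rpow (pnorm nu p (fun s => bellman_star G pi i (v i) s - v i s)) p +
           rpow (pnorm nu p (fun s => bellman G pi i (v i) s - v i s)) p))) (1 / p).
Proof.
exact: (@main N S A G HG p p' Hp Hp' Hpp' mu nu Hmu Hnu Hnupos rho Hrho pi Hpi v).
Qed.
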